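(* Let $n$ be a positive integer, let $c$ be the center of the star $S_n$, let $\nu$ be an end vertex of the path $P_n$, and let $v$ be any vertex of an $n$-vertex tree $T$. Then for every integer $k\geq 0$, $$n_k(c,S_n)\geq n_k(v,T)\geq n_k(\nu,P_n).$$
   Context: A subtree of a graph $G$ is a subgraph of $G$ that is a tree (distinguished as subgraphs), with the empty subtree also allowed. For a vertex $v$ of $G$, $n_k(v,G)$ is the number of subtrees of $G$ with exactly $k$ vertices that contain $v$. $S_n$ is the $n$-vertex star and $P_n$ the $n$-vertex path. *)

(* Defs.v *)
From mathcomp Require Import all_boot.
Set Implicit Arguments. Unset Strict Implicit. Unset Printing Implicit Defensive.

Definition simple_graph (V : finType) (e : rel V) : Prop :=
  symmetric e /\ irreflexive e.

Definition edges (V : finType) (e : rel V) : {set {set V}} :=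
  [set [set x; y] | x in V, y in V & e x y].

Definition adjF (V : finType) (F : {set {set V}}) : rel V :=
  fun x y => (x != y) && ([set x; y] \in F).

Definition is_subgraph (V : finType) (e : rel V) (S : {set V}) (F : {set {set V}}) : bool :=
  (F \subset edges e) && [forall f in F, f \subset S].

Definition connectedb (V : finType) (S : {set V}) (F : {set {set V}}) : bool :=
  [forall x in S, forall y in S, connect (adjF F) x y].

(* A duplicate-free sequence has length <= #|V|, so
   quantifying over lengths m <= #|V| is exhaustive. *)
Definition acyclicb (V : finType) (F : {set {set V}}) : bool :=
  [forall m : 'I_(#|V|).+1, forall s : m.-tuple V,
      ~~ [&& uniq s, 2 < m & cycle (adjF F) s]].

(* (S, F) is a tree (the empty tree is allowed). *)
Definition is_tree (V : finType) (S : {set V}) (F : {set {set V}}) : bool :=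
  connectedb S F && acyclicb F.

Definition is_subtree (V : finType) (e : rel V) (S : {set V}) (F : {set {set V}}) : bool :=
  is_subgraph e S F && is_tree S F.

Definition n_k (V : finType) (e : rel V) (k : nat) (v : V) : nat :=
  #|[set SF : {set V} * {set {set V}} |
       [&& is_subtree e SF.1 SF.2, v \in SF.1 & #|SF.1| == k]]|.

Definition is_tree_graph (V : finType) (e : rel V) : bool :=
  is_tree [set: V] (edges e).

Definition star_rel (n : nat) : rel 'I_n :=
  fun i j => ((val i == 0) && (val j != 0)) || ((val j == 0) && (val i != 0)).

Definition path_rel (n : nat) : rel 'I_n :=
  fun i j => ((val i).+1 == val j) || ((val j).+1 == val i).
Arguments star_rel n : clear implicits.
Arguments path_rel n : clear implicits.

(* Main.v *)
Require Import Defs.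
From mathcomp Require Import all_boot fingroup perm.
From mathcomp Require Import zify.
Set Implicit Arguments. Unset Strict Implicit. Unset Printing Implicit Defensive.

Section Gen.
Variable V : finType.

Lemma adjF_sym (F : {set {set V}}) : symmetric (adjF F).
Proof. by move=> x y; rewrite /adjF eq_sym setUC. Qed.

Lemma set2_eq (a b x y : V) : a != b -> [set a; b] = [set x; y] ->
  (a = x /\ b = y) \/ (a = y /\ b = x).
Proof.
move=> ab E.
have ha : a \in [set x; y] by rewrite -E set21.
have hb : b \in [set x; y] by rewrite -E set22.
case/set2P: ha ab => ->; case/set2P: hb => -> ; rewrite ?eqxx //; by auto.
Qed.

Lemma adjF_edges (r : rel V) a b : adjF (edges r) a b -> r a b || r b a.
Proof.
case/andP=> ab /imset2P[x y _]; rewrite inE => /andP[_ rxy] E.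
by case: (set2_eq ab E) => [[-> ->]|[-> ->]]; rewrite rxy ?orbT.
Qed.

Lemma in_edges (r : rel V) a b : r a b -> [set a; b] \in edges r.
Proof. by move=> rab; apply/imset2P; exists a b => //; rewrite inE. Qed.

Lemma sub_adjF (F E : {set {set V}}) : F \subset E -> subrel (adjF F) (adjF E).
Proof. by move=> FE x y /andP[xy /(subsetP FE) h]; rewrite /adjF xy h. Qed.

Lemma acyclic_sub (F E : {set {set V}}) : F \subset E -> acyclicb E -> acyclicb F.
Proof.
move=> FE /forallP aE; apply/forallP=> m; apply/forallP=> s.
have := forallP (aE m) s; apply: contra => /and3P[u m2 cy].
by rewrite u m2 /=; apply: sub_cycle cy; apply: sub_adjF.
Qed.

Lemma connected_root (S : {set V}) F v :
  (forall a, a \in S -> connect (adjF F) a v) -> connectedb S F.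
Proof.
move=> H; apply/forallP=> x; apply/implyP=> xS; apply/forallP=> y; apply/implyP=> yS.
apply: connect_trans (H x xS) _; rewrite (sym_connect_sym (adjF_sym F)); exact: H.
Qed.

Lemma connectedP (S : {set V}) F x y : connectedb S F -> x \in S -> y \in S ->
  connect (adjF F) x y.
Proof. by move=> /forallP/(_ x)/implyP H xS yS; have /forallP/(_ y)/implyP := H xS; apply. Qed.

Lemma boundary (r : rel V) (S : {set V}) a b : connect r a b -> a \in S -> b \notin S ->
  exists y x, [/\ y \in S, x \notin S & r y x].
Proof.
move=> /connectP[p]; elim: p a => [|z p IH] a /=.
  by move=> _ -> aS; rewrite aS.
move=> /andP[raz pz] lb aS bS.
case zS: (z \in S); first exact: IH pz lb zS bS.
by exists a, z; split; rewrite ?zS.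
Qed.

Lemma subtree_unique (e : rel V) (S : {set V}) F1 F2 :
  irreflexive e -> acyclicb (edges e) ->
  is_subtree e S F1 -> is_subtree e S F2 -> F1 \subset F2.
Proof.
move=> irr ac /andP[/andP[F1E F1S] _] /andP[/andP[F2E F2S] /andP[c2 _]].
apply/subsetP=> f fF1.
have /imset2P[x y _] := subsetP F1E f fF1; rewrite inE => /andP[_ exy] Ef.
have xy : x != y by apply: contraTneq exy => ->; rewrite irr.
have fS : f \subset S by have := forallP F1S f; rewrite fF1.
have xS : x \in S by apply: (subsetP fS); rewrite Ef set21.
have yS : y \in S by apply: (subsetP fS); rewrite Ef set22.
apply: contraT => fF2.
have /connectP[p pth ly] := connectedP c2 xS yS.
case: (shortenP pth) ly => p' pth' u _ ly.
case: p' pth' u ly => [|z [|w q]] pth' u ly; rewrite /= in ly.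
- by move: xy; rewrite ly eqxx.
- move: pth' => /=; rewrite -ly andbT => /andP[_].
  by rewrite -Ef (negbTE fF2).
- set s := x :: z :: w :: q.
  have hsz : size s < #|V|.+1.
    by rewrite ltnS -(card_uniqP u) max_card.
  have := forallP (forallP ac (Ordinal hsz)) (in_tuple s).
  move/negP => H; exfalso; apply: H; apply/and3P; split; [exact: u | by [] |].
  change (path.cycle (adjF (edges e)) s); rewrite /s /path.cycle rcons_path.
  apply/andP; split; first by apply: sub_path pth'; apply: sub_adjF.
  rewrite /= -ly /adjF eq_sym xy /= setUC -Ef.
  exact: (subsetP F1E f fF1).
Qed.

Definition ind (e : rel V) (S : {set V}) : {set {set V}} :=
  [set f in edges e | f \subset S].

Lemma ind_subgraph e S : is_subgraph e S (ind e S).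
Proof.
apply/andP; split.
  by apply/subsetP=> f; rewrite inE => /andP[].
by apply/forallP=> f; apply/implyP; rewrite inE => /andP[].
Qed.

Lemma ind_sub e S : ind e S \subset edges e.
Proof. by apply/subsetP=> f; rewrite inE => /andP[]. Qed.

Lemma ind_mono e (S S' : {set V}) : S \subset S' -> ind e S \subset ind e S'.
Proof.
move=> SS'; apply/subsetP=> f; rewrite !inE => /andP[-> fS] /=.
exact: subset_trans fS SS'.
Qed.

Lemma grow (e : rel V) v : connectedb [set: V] (edges e) ->
  forall k, 0 < k <= #|V| ->
  exists S : {set V}, [/\ v \in S, #|S| = k & connectedb S (ind e S)].
Proof.
move=> con; elim=> [|k IH] //= kV.
case: k IH kV => [|k] IH kV.
  exists [set v]; split; [by rewrite set11 | by rewrite cards1 |].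
  by apply: (connected_root (v:=v)) => a; rewrite inE => /eqP ->; exact: connect0.
have [|S [vS cS conS]] := IH; first by rewrite /= ltnW.
have : 0 < #|~: S|.
  by move: kV; rewrite -(cardsC S) cS; lia.
case/card_gt0P=> z; rewrite inE => zS.
have cvz := connectedP con (in_setT v) (in_setT z).
have [y [x [yS xS /andP[yx yxE]]]] := boundary cvz vS zS.
have lift : forall a, a \in S -> connect (adjF (ind e (x |: S))) a v.
  move=> a aS; apply: connect_sub (connectedP conS aS vS).
  move=> p q pq; apply: connect1; apply: sub_adjF pq.
  by apply: ind_mono; apply: subsetUr.
exists (x |: S); split.
- by rewrite in_setU1 vS orbT.
- by rewrite cardsU1 xS cS.
apply: (connected_root (v:=v)) => a; rewrite in_setU1 => /predU1P[->|aS]; last exact: lift.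
apply: connect_trans (lift _ yS); apply: connect1; rewrite adjF_sym.
by rewrite /adjF yx inE yxE /= subUset !sub1set !in_setU1 yS eqxx orbT.
Qed.

End Gen.
Section SP.
Variable n : nat.

Lemma star_adj (a b : 'I_n) : adjF (edges (star_rel n)) a b -> (val a == 0) || (val b == 0).
Proof. by move/adjF_edges; rewrite /star_rel; case: (val a == 0); case: (val b == 0). Qed.

Lemma ord0_eq (p q : 'I_n) : val p == 0 -> val q == 0 -> p = q.
Proof. by move=> /eqP hp /eqP hq; apply: val_inj; rewrite /= hp hq. Qed.

Lemma star_acyclic : acyclicb (edges (star_rel n)).
Proof.
apply/forallP=> m; apply/forallP=> s; apply/negP=> /and3P[].
move: (size_tuple s); move: (tval s) => l <-; case: l => [|a [|b [|d t]]] //= u _.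
rewrite /path.cycle /= => /and3P[/star_adj Hab /star_adj Hbd Hrest].
have [nx nxin /star_adj Hdn] : exists2 nx, nx \in a :: t & adjF (edges (star_rel n)) d nx.
  case: t u Hrest => [|w t] u /=.
    by rewrite andbT => H; exists a; rewrite ?inE ?eqxx.
  by case/andP => H _; exists w; rewrite ?inE ?eqxx ?orbT.
move: u; rewrite !inE => /and4P[/norP[ab /norP[ad _]] /norP[bd bt] _ _].
case: (boolP (val b == 0)) => Zb.
  case/orP: Hdn => Z.
    by move: bd; rewrite (ord0_eq Zb Z) eqxx.
  move: nxin; rewrite inE (ord0_eq Z Zb) => /orP[/eqP E|bt'].
    by move: ab; rewrite E eqxx.
  by move: bt; rewrite bt'.
rewrite (negbTE Zb) orbF in Hab; rewrite (negbTE Zb) /= in Hbd.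
by move: ad; rewrite (ord0_eq Hab Hbd) eqxx.
Qed.

Lemma star_subtree (c : 'I_n) (S : {set 'I_n}) : val c = 0 -> c \in S ->
  is_subtree (star_rel n) S (ind (star_rel n) S).
Proof.
move=> hc cS; rewrite /is_subtree ind_subgraph /is_tree (acyclic_sub (ind_sub _ _) star_acyclic) andbT /=.
apply: (connected_root (v:=c)) => a aS.
case: (eqVneq a c) => [->|ac]; first exact: connect0.
have a0 : val a != 0.
  by apply: contra ac => /eqP h; apply/eqP; apply: val_inj; rewrite /= h hc.
apply: connect1; rewrite /adjF ac inE in_edges /=.
  by rewrite subUset !sub1set aS cS.
by rewrite /star_rel hc eqxx a0 orbT.
Qed.

Lemma upper (V : finType) (e : rel V) (hV : #|V| = n) (c : 'I_n) (hc : val c = 0) v k :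
  irreflexive e -> acyclicb (edges e) -> n_k e k v <= n_k (star_rel n) k c.
Proof.
move=> irr ac.
pose h x := cast_ord hV (enum_rank x).
pose g x := tperm (h v) c (h x).
have ginj : injective g by move=> x y /perm_inj /cast_ord_inj /enum_rank_inj.
pose Phi (SF : {set V} * {set {set V}}) := (g @: SF.1, ind (star_rel n) (g @: SF.1)).
rewrite /n_k -(card_in_imset (f:=Phi)).
  apply: subset_leq_card; apply/subsetP => _ /imsetP[[S F] HSF ->].
  move: HSF; rewrite !inE /= => /and3P[st vS /eqP cS].
  have cin : c \in g @: S by apply/imsetP; exists v => //; rewrite /g tpermL.
  by rewrite (star_subtree hc cin) cin card_imset // cS eqxx.
move=> [S1 F1] [S2 F2]; rewrite !inE /= => /and3P[st1 _ _] /and3P[st2 _ _] [E _].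
have ES := imset_inj ginj E; subst S2.
congr pair; apply/eqP; rewrite eqEsubset.
by rewrite (subtree_unique irr ac st1 st2) (subtree_unique irr ac st2 st1).
Qed.

Lemma path_adj (a b : 'I_n) : adjF (edges (path_rel n)) a b ->
  (val a).+1 = val b \/ (val b).+1 = val a.
Proof. by move/adjF_edges; rewrite /path_rel -!orbA => /or4P[]/eqP; auto. Qed.

Lemma path_ivt (F : {set {set 'I_n}}) (x y : 'I_n) : F \subset edges (path_rel n) ->
  connect (adjF F) x y -> forall i, val x <= i < val y ->
  exists a b : 'I_n, [/\ val a = i, val b = i.+1 & [set a; b] \in F].
Proof.
move=> FE /connectP[p]; elim: p x => [|z p IH] x /=.
  by move=> _ -> i /=; lia.
move=> /andP[xz pz] ly i hi.
have hxz := path_adj (sub_adjF FE xz).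
case: (eqVneq i (val x)) => [ei|nei].
  case: hxz => hxz.
    exists x, z; split => //; [by rewrite ei hxz| by case/andP: xz].
  by apply: (IH z pz ly i); move: hi hxz ei; rewrite /=; lia.
move/eqP: nei => nei; by case: hxz => hxz; apply: (IH z pz ly i); move: hi hxz nei; rewrite /=; lia.
Qed.

Lemma down_sub (A B : {set 'I_n}) :
  (forall a b : 'I_n, val a <= val b -> b \in A -> a \in A) ->
  (forall a b : 'I_n, val a <= val b -> b \in B -> a \in B) ->
  #|A| = #|B| -> A \subset B.
Proof.
move=> dA dB AB; apply/subsetP=> i iA; apply: contraT => iB.
pose L := [set j : 'I_n | val j < val i].
have BL : B \subset L.
  apply/subsetP=> j jB; rewrite inE ltnNge; apply: contra iB => ij; exact: dB ij jB.
have LA : i |: L \subset A.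
  apply/subsetP=> j; rewrite in_setU1 => /predU1P[->//|]; rewrite inE => ji.
  by apply: dA iA; exact: ltnW.
have := subset_leq_card BL; have := subset_leq_card LA.
rewrite cardsU1 inE ltnn AB /= => h1 h2; have := leq_trans h1 h2; by rewrite add1n ltnn.
Qed.

Lemma path_member (nu : 'I_n) (S : {set 'I_n}) F :
  is_subtree (path_rel n) S F -> nu \in S ->
  [/\ F = ind (path_rel n) S,
      val nu = 0 -> (forall a b : 'I_n, val a <= val b -> b \in S -> a \in S) &
      val nu = n.-1 -> (forall a b : 'I_n, val a <= val b -> a \in S -> b \in S)].
Proof.
move=> /andP[/andP[FE FS] /andP[con _]] nuS.
have fsub : forall f, f \in F -> f \subset S.
  by move=> f fF; have := forallP FS f; rewrite fF.
have edge : forall a b : 'I_n, a \in S -> b \in S -> val b = (val a).+1 -> [set a; b] \in F.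
  move=> a b aS bS hb.
  have hi : val a <= val a < val b by rewrite hb leqnn ltnSn.
  have [a' [b' [ha' hb' H]]] := path_ivt FE (connectedP con aS bS) hi.
  have -> : a = a' by apply: val_inj.
  have -> : b = b' by apply: val_inj; rewrite /= hb' hb.
  exact: H.
split.
- apply/setP=> f; rewrite inE; apply/idP/andP.
    by move=> fF; split; [exact: (subsetP FE f fF) | exact: fsub].
  case=> /imset2P[x y _]; rewrite inE => /andP[_ rxy] -> fS.
  have xS : x \in S by apply: (subsetP fS); rewrite set21.
  have yS : y \in S by apply: (subsetP fS); rewrite set22.
  case/orP: rxy => /eqP h; first exact: edge.
  by rewrite setUC; exact: edge.
- move=> h0 a b ab bS.
  case: (eqVneq a b) => [->//|nab].
  have hi : val nu <= val a < val b.
    rewrite h0 /= ltn_neqAle ab andbT; apply: contra nab => /eqP E.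
    by apply/eqP; apply: val_inj.
  have [a' [b' [ha' hb' H]]] := path_ivt FE (connectedP con nuS bS) hi.
  have -> : a = a' by apply: val_inj.
  by apply: (subsetP (fsub _ H)); rewrite set21.
- move=> hN a b ab aS.
  case: (eqVneq a b) => [<-//|nab].
  have hb := ltn_ord b.
  have hab : val a < val b.
    rewrite ltn_neqAle ab andbT; apply: contra nab => /eqP E.
    by apply/eqP; apply: val_inj.
  have hi : val a <= (val b).-1 < val nu by move: hab hb; rewrite /= hN; lia.
  have [a' [b' [ha' hb' H]]] := path_ivt FE (connectedP con aS nuS) hi.
  have -> : b = b' by apply: val_inj; move: hb' hab; rewrite /=; lia.
  by apply: (subsetP (fsub _ H)); rewrite set22.
Qed.

Lemma path_le1 (nu : 'I_n) k : (val nu == 0) || (val nu == n.-1) ->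
  n_k (path_rel n) k nu <= 1.
Proof.
move=> hnu; apply/card_le1_eqP => [[S1 F1] [S2 F2]].
rewrite !inE /= => /and3P[st1 n1 /eqP c1] /and3P[st2 n2 /eqP c2].
have [E1 d1 u1] := path_member st1 n1.
have [E2 d2 u2] := path_member st2 n2.
suff ES : S1 = S2 by rewrite E1 E2 ES.
have c12 : #|S1| = #|S2| by rewrite c1 c2.
case/orP: hnu => /eqP hnu.
  apply/eqP; rewrite eqEsubset (down_sub (d1 hnu) (d2 hnu)) //.
  by rewrite (down_sub (d2 hnu) (d1 hnu)).
have dC : forall (S : {set 'I_n}), (forall a b : 'I_n, val a <= val b -> a \in S -> b \in S) ->
   forall a b : 'I_n, val a <= val b -> b \in ~: S -> a \in ~: S.
  by move=> S uS a b ab; rewrite !inE; apply: contra; exact: uS.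
have cC : #|~: S1| = #|~: S2|.
  by have := cardsC S1; have := cardsC S2; rewrite c12; lia.
have EC : ~: S1 = ~: S2.
  apply/eqP; rewrite eqEsubset (down_sub (dC _ (u1 hnu)) (dC _ (u2 hnu))) //.
  by rewrite (down_sub (dC _ (u2 hnu)) (dC _ (u1 hnu))).
by rewrite -[S1]setCK EC setCK.
Qed.

End SP.

Theorem lemma2 (n : nat) (hn : 0 < n)
  (c : 'I_n) (hc : val c = 0)
  (nu : 'I_n) (hnu : (val nu == 0) || (val nu == n.-1))
  (V : finType) (e : rel V) (hV : #|V| = n)
  (hsimple : simple_graph e) (htree : is_tree_graph e) (v : V) (k : nat) :
  n_k (star_rel n) k c >= n_k e k v /\ n_k e k v >= n_k (path_rel n) k nu.
Proof.
case: hsimple => _ irr.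
case/andP: htree => con ac.
split; first exact: upper.
case: (posnP (n_k (path_rel n) k nu)) => [->//|pos].
apply: leq_trans (@path_le1 n nu k hnu) _.
move/card_gt0P: pos => [[S F]]; rewrite inE /= => /and3P[_ nuS /eqP cS].
have hk : 0 < k <= #|V|.
  apply/andP; split; first by rewrite -cS; apply/card_gt0P; exists nu.
  by rewrite hV -cS; apply: leq_trans (max_card _) _; rewrite card_ord.
have [S' [vS' cS' conS']] := grow v con hk.
apply/card_gt0P; exists (S', ind e S'); rewrite inE /= vS' cS' eqxx andbT.
rewrite /is_subtree ind_subgraph /is_tree conS' /=. rewrite andbT; exact: acyclic_sub (ind_sub _ _) ac.
Qed.
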